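(* Let $m$ be a positive integer. If $\|m\alpha\|\ge\|q_{k-1}\alpha\|+\|q_k\alpha\|$ for some $k\ge1$, then $\mathrm{ab}_\alpha(m)<q_k$.
   Context: $\alpha\in(0,1)$ irrational, $\alpha=[0;a_1,a_2,\ldots]$ with positive integers $a_i$, $a_1\ge2$; $q_{-1}=0$, $q_0=1$, $q_1=a_1$, $q_k=a_kq_{k-1}+q_{k-2}$ ($k\ge2$). $\|x\|$ is the distance from $x$ to the nearest integer. Sturmian words of slope $\alpha$: with $R(\rho)=\{\rho+\alpha\}$ on $[0,1)$ and either $I_0=[0,1-\alpha)$ or $I_0=(0,1-\alpha]$ ($I_1$ its complement), $\mathbf{s}_{\rho,\alpha}$ has $n$-th letter $0$ iff $R^n(\rho)\in I_0$; they share a set $\mathcal{L}_\alpha$ of finite factors. An abelian power of period $m$ and exponent $e$ is a concatenation of $e$ pairwise abelian equivalent words (same numbers of $0$s and $1$s) of length $m$; $\mathrm{ab}_\alpha(m)$ is the maximum exponent of an abelian power of period $m$ in $\mathcal{L}_\alpha$ (it is known that $\mathrm{ab}_\alpha(m)=\lfloor 1/\|m\alpha\|\rfloor$). *)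

(* Defs.v *)
From Stdlib Require Import Reals Lra Lia ZArith Arith List.
Open Scope R_scope.

(* fractional part {x} = x - floor x  (Stdlib: Int_part is the floor) *)
Definition frac (x : R) : R := frac_part x.

Definition nint_dist (x : R) : R := Rmin (frac x) (1 - frac x).

Definition irrational (x : R) : Prop :=
  forall (p : Z) (q : nat), (q > 0)%nat -> x <> IZR p / INR q.

(* Continued fraction expansion alpha = [0; a_1, a_2, ...] via the Gauss map:
   x_0 = alpha, x_{k+1} = {1 / x_k}, a_{k+1} = floor (1 / x_k). *)
Fixpoint gauss_iter (alpha : R) (k : nat) : R :=
  match k with
  | O => alpha
  | S k' => frac (1 / gauss_iter alpha k')
  end.

(* partial quotient a_k (k >= 1); a_0 = 0 since alpha in (0,1) *)
Definition cf_a (alpha : R) (k : nat) : nat :=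
  match k with
  | O => O
  | S k' => Z.to_nat (Int_part (1 / gauss_iter alpha k'))
  end.

(* qpair k = (q_{k-1}, q_k), with q_{-1} = 0, q_0 = 1, q_k = a_k q_{k-1} + q_{k-2} *)
Fixpoint cf_qpair (alpha : R) (k : nat) : nat * nat :=
  match k with
  | O => (0%nat, 1%nat)
  | S k' => let (p, q) := cf_qpair alpha k' in (q, (cf_a alpha (S k') * q + p)%nat)
  end.

Definition cf_q (alpha : R) (k : nat) : nat := snd (cf_qpair alpha k).

(* Sturmian word s_{rho,alpha}; letters: false = 0, true = 1.
   Letter n is 0 iff R^n(rho) = {rho + n alpha} lies in I_0, where
   I_0 = [0, 1-alpha) if right_closed = false, and I_0 = (0, 1-alpha] otherwise. *)
Definition in_I0 (alpha : R) (right_closed : bool) (y : R) : Prop :=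
  if right_closed then 0 < y /\ y <= 1 - alpha else 0 <= y /\ y < 1 - alpha.

Definition in_I0_dec (alpha : R) (right_closed : bool) (y : R) :
  {in_I0 alpha right_closed y} + {~ in_I0 alpha right_closed y}.
Proof.
  unfold in_I0; destruct right_closed.
  - destruct (Rlt_dec 0 y); destruct (Rle_dec y (1 - alpha)); intuition.
  - destruct (Rle_dec 0 y); destruct (Rlt_dec y (1 - alpha)); intuition.
Defined.

Definition sturmian_letter (rho alpha : R) (right_closed : bool) (n : nat) : bool :=
  if in_I0_dec alpha right_closed (frac (rho + INR n * alpha)) then false else true.

Definition in_L (alpha : R) (w : list bool) : Prop :=
  exists (rho : R) (right_closed : bool) (i : nat),
    (0 <= rho < 1)%R /\
    w = map (sturmian_letter rho alpha right_closed) (List.seq i (length w)).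

Definition abelian_equiv (u v : list bool) : Prop :=
  count_occ Bool.bool_dec u false = count_occ Bool.bool_dec v false /\
  count_occ Bool.bool_dec u true = count_occ Bool.bool_dec v true.

Definition abelian_power (m e : nat) (w : list bool) : Prop :=
  exists blocks : list (list bool),
    length blocks = e /\
    Forall (fun u => length u = m) blocks /\
    (forall u v, In u blocks -> In v blocks -> abelian_equiv u v) /\
    w = concat blocks.

(* Main.v *)
Require Import Defs.
From Stdlib Require Import Reals List Lra Lia ZArith.
Open Scope R_scope.

Lemma Int_part_charac (u : R) (z : Z) : IZR z <= u < IZR z + 1 -> Int_part u = z.
Proof.
  intros [H1 H2]. unfold Int_part.
  rewrite <- (up_tech u z H1); [lia|]. rewrite plus_IZR. simpl. lra.
Qed.

Lemma frac_shift (z : Z) (r : R) : 0 <= r < 1 -> frac (IZR z + r) = r.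
Proof.
  intros H. unfold frac, frac_part. rewrite (Int_part_charac _ z); lra.
Qed.

Lemma frac_decomp (x : R) : x = IZR (Int_part x) + frac x /\ 0 <= frac x < 1.
Proof.
  unfold frac. destruct (base_fp x). unfold frac_part in *. split; lra.
Qed.

Lemma frac_add (x a : R) : 0 <= a < 1 ->
  (frac x < 1 - a -> frac (x + a) = frac x + a) /\
  (frac x >= 1 - a -> frac (x + a) = frac x + a - 1).
Proof.
  intros Ha. destruct (frac_decomp x) as [Hx Hf].
  split; intros H.
  - rewrite Hx at 1. replace (IZR (Int_part x) + frac x + a) with (IZR (Int_part x) + (frac x + a)) by lra.
    apply frac_shift. lra.
  - rewrite Hx at 1. replace (IZR (Int_part x) + frac x + a) with (IZR (Int_part x + 1) + (frac x + a - 1)) by (rewrite plus_IZR; simpl; lra).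
    apply frac_shift. lra.
Qed.

Lemma nint_dist_frac (y : R) (z : Z) (D : R) (s : R) :
  (s = 1 \/ s = -1) -> 0 < D <= 1/2 -> y = IZR z + s * D -> nint_dist y = D.
Proof.
  intros [Hs|Hs] HD Hy; subst; unfold nint_dist.
  - rewrite Rmult_1_l, frac_shift by lra. unfold Rmin; destruct Rle_dec; lra.
  - replace (IZR z + -1 * D) with (IZR (z - 1) + (1 - D)) by (rewrite minus_IZR; simpl; lra).
    rewrite frac_shift by lra. unfold Rmin; destruct Rle_dec; lra.
Qed.

Lemma int_dist_ge (y : R) (c : Z) : Rabs (y - IZR c) >= nint_dist y.
Proof.
  destruct (frac_decomp y) as [Hy Hf]. unfold nint_dist.
  rewrite Hy at 1. 
  destruct (Z_le_gt_dec c (Int_part y)) as [Hc|Hc].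
  - apply IZR_le in Hc. unfold Rmin; destruct Rle_dec; rewrite Rabs_right; lra.
  - assert (IZR c >= IZR (Int_part y) + 1) by (rewrite <- (plus_IZR _ 1); apply Rle_ge, IZR_le; lia).
    unfold Rmin; destruct Rle_dec; rewrite Rabs_left1; lra.
Qed.

Lemma nint_dist_ge0 y : 0 <= nint_dist y.
Proof. destruct (frac_decomp y). unfold nint_dist, Rmin; destruct Rle_dec; lra. Qed.

Section CF.
Variable alpha : R.

Fixpoint Dp (k : nat) : R := match k with O => alpha | S k' => Dp k' * gauss_iter alpha (S k') end.
Definition Dm (k : nat) : R := match k with O => 1 | S k' => Dp k' end.

Fixpoint cf_ppair (k : nat) : nat * nat :=
  match k with
  | O => (1%nat, 0%nat)
  | S k' => let (p, q) := cf_ppair k' in (q, (cf_a alpha (S k') * q + p)%nat)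
  end.

Definition Q k := INR (snd (cf_qpair alpha k)).
Definition Qm k := INR (fst (cf_qpair alpha k)).
Definition P k := INR (snd (cf_ppair k)).
Definition Pm k := INR (fst (cf_ppair k)).

Lemma Dp_Dm k : Dp k = Dm k * gauss_iter alpha k.
Proof. destruct k; simpl; lra. Qed.

Lemma sign_pm k : (-1)^k = 1 \/ (-1)^k = -1.
Proof. induction k; simpl; [left; lra|]. destruct IHk as [H|H]; rewrite H; lra. Qed.

Lemma Q_S k : Q (S k) = INR (cf_a alpha (S k)) * Q k + Qm k /\ Qm (S k) = Q k.
Proof.
  unfold Q, Qm; simpl. destruct (cf_qpair alpha k) as [a b]; simpl.
  rewrite plus_INR, mult_INR. split; lra.
Qed.

Lemma P_S k : P (S k) = INR (cf_a alpha (S k)) * P k + Pm k /\ Pm (S k) = P k.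
Proof.
  unfold P, Pm; simpl. destruct (cf_ppair k) as [a b]; simpl.
  rewrite plus_INR, mult_INR. split; lra.
Qed.

Hypothesis Ha : 0 < alpha < 1.
Hypothesis Hirr : irrational alpha.

Lemma cf_main k :
  0 < gauss_iter alpha k < 1 /\ 1 <= Q k /\ Qm k <= Q k /\
  Qm k * Dp k + Q k * Dm k = 1 /\
  Q k * alpha - P k = (-1)^k * Dp k /\
  Qm k * alpha - Pm k = - (-1)^k * Dm k /\
  0 < Dp k <= alpha.
Proof.
  induction k as [|k IH].
  - unfold Q, Qm, P, Pm; simpl. repeat split; lra.
  - destruct IH as (Hx & HQ & HQm & Hid & HP & HPm & HD).
    set (x := gauss_iter alpha k) in *.
    assert (Hax : INR (cf_a alpha (S k)) = IZR (Int_part (1 / x))).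
    { simpl. fold x. rewrite INR_IZR_INZ, Z2Nat.id; [reflexivity|].
      destruct (base_Int_part (1/x)) as [_ H2].
      assert (1 / x > 1). { unfold Rdiv; rewrite Rmult_1_l. rewrite <- Rinv_1. apply Rinv_lt_contravar; lra. }
      assert (IZR (Int_part (1/x)) > -1) by lra.
      apply lt_IZR in H0. lia. }
    assert (HA1 : INR (cf_a alpha (S k)) >= 1).
    { rewrite Hax. destruct (base_Int_part (1/x)) as [_ H2].
      assert (1 / x > 1). { unfold Rdiv; rewrite Rmult_1_l. rewrite <- Rinv_1. apply Rinv_lt_contravar; lra. }
      assert (IZR (Int_part (1/x)) > 0) by lra. apply lt_IZR in H0.
      apply Rle_ge, IZR_le. lia. }
    set (A := INR (cf_a alpha (S k))) in *.
    assert (Hx' : gauss_iter alpha (S k) = 1 / x - A).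
    { simpl. fold x. unfold frac, frac_part. rewrite Hax. reflexivity. }
    set (x' := gauss_iter alpha (S k)) in *.
    assert (Hfx : 0 <= x' < 1). { unfold x'; simpl; fold x; unfold frac. destruct (base_fp (1 / x)); lra. }
    assert (HDx : Dp k / x = Dm k). { rewrite Dp_Dm. fold x. field. lra. }
    destruct (Q_S k) as [HQS HQmS]. destruct (P_S k) as [HPS HPmS].
    fold A in HQS, HPS.
    assert (HDS : Dp (S k) = Dp k * x') by reflexivity.
    assert (HDmS : Dm (S k) = Dp k) by reflexivity.
    assert (0 <= Qm k) by apply pos_INR.
    assert (HQS1 : 1 <= Q (S k)) by nra.
    assert (HPS' : Q (S k) * alpha - P (S k) = (-1)^(S k) * Dp (S k)).
    { rewrite HQS, HPS, HDS, Hx'. simpl.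
      replace ((INR (cf_a alpha (S k)))) with A by reflexivity.
      transitivity (A * (Q k * alpha - P k) + (Qm k * alpha - Pm k)); [ring|].
      rewrite HP, HPm, <- HDx. field. lra. }
    assert (Hx'0 : x' <> 0).
    { intro H0. rewrite HDS, H0, Rmult_0_r, Rmult_0_r in HPS'.
      apply (Hirr (Z.of_nat (snd (cf_ppair (S k)))) (snd (cf_qpair alpha (S k)))).
      + apply INR_lt. change (INR 0 < Q (S k)). simpl INR. lra.
      + rewrite <- !INR_IZR_INZ. fold (P (S k)). fold (Q (S k)). field_simplify_eq; lra. }
    split; [lra|]. split; [lra|]. split; [rewrite HQmS; nra|].
    split.
    { rewrite HQmS, HQS, HDS, HDmS, Hx'.
      transitivity (Q k * (Dp k / x) + Qm k * Dp k); [field; lra|]. rewrite HDx. lra. }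
    split; [exact HPS'|].
    split. { rewrite HQmS, HPmS, HDmS, HP. simpl. ring. }
    rewrite HDS. split; [apply Rmult_lt_0_compat; lra| nra].
Qed.

End CF.

Section W.
Variables (rho alpha : R) (rc : bool).
Hypothesis Ha : 0 < alpha < 1.

Definition phi (t : nat) : R :=
  let y := frac (rho + INR t * alpha) in
  if rc then (if Req_EM_T y 0 then 1 else y) else y.

Definition lv (b : bool) : R := if b then 1 else 0.

Lemma phi_step t : phi (S t) = phi t + alpha - lv (sturmian_letter rho alpha rc t).
Proof.
  unfold phi, sturmian_letter, lv.
  rewrite S_INR. replace (rho + (INR t + 1) * alpha) with ((rho + INR t * alpha) + alpha) by ring.
  set (x := rho + INR t * alpha).
  destruct (frac_add x alpha) as [F1 F2]; [lra|].
  destruct (frac_decomp x) as [_ Hf].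
  destruct (in_I0_dec alpha rc (frac x)) as [HI|HI]; unfold in_I0 in HI; destruct rc.
  - destruct HI as [H1 H2].
    destruct (Rlt_dec (frac x) (1 - alpha)) as [Hl|Hl].
    + rewrite (F1 Hl). destruct (Req_EM_T (frac x + alpha) 0); [lra|].
      destruct (Req_EM_T (frac x) 0); lra.
    + rewrite (F2 ltac:(lra)). destruct (Req_EM_T (frac x + alpha - 1) 0); [|lra].
      destruct (Req_EM_T (frac x) 0); lra.
  - rewrite (F1 ltac:(lra)). lra.
  - destruct (Req_EM_T (frac x) 0) as [H0|H0].
    + rewrite H0 in F1. rewrite (F1 ltac:(lra)). destruct (Req_EM_T (0 + alpha) 0); lra.
    + assert (frac x > 1 - alpha) by (apply Rnot_le_lt; intro; apply HI; lra).
      rewrite (F2 ltac:(lra)). destruct (Req_EM_T (frac x + alpha - 1) 0); lra.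
  - assert (frac x >= 1 - alpha) by (apply Rnot_lt_ge; intro; apply HI; lra).
    rewrite (F2 H). lra.
Qed.

Lemma phi_bound s t : Rabs (phi s - phi t) < 1.
Proof.
  unfold phi.
  destruct (frac_decomp (rho + INR s * alpha)) as [_ H1].
  destruct (frac_decomp (rho + INR t * alpha)) as [_ H2].
  destruct rc; [|apply Rabs_def1; lra].
  destruct (Req_EM_T (frac (rho + INR s * alpha)) 0);
  destruct (Req_EM_T (frac (rho + INR t * alpha)) 0); apply Rabs_def1; lra.
Qed.

Definition cnt (l : list bool) : nat := count_occ Bool.bool_dec l true.

Lemma phi_block m n : phi (n + m) = phi n + INR m * alpha - INR (cnt (map (sturmian_letter rho alpha rc) (seq n m))).
Proof.
  revert n; induction m as [|m IH]; intros n.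
  - rewrite Nat.add_0_r. simpl. lra.
  - replace (n + S m)%nat with (S n + m)%nat by lia. rewrite IH, phi_step.
    change (seq n (S m)) with (n :: seq (S n) m).
    change (map (sturmian_letter rho alpha rc) (n :: seq (S n) m)) with
      (sturmian_letter rho alpha rc n :: map (sturmian_letter rho alpha rc) (seq (S n) m)).
    unfold cnt. rewrite (S_INR m). unfold lv.
    destruct (sturmian_letter rho alpha rc n) eqn:E.
    + rewrite count_occ_cons_eq, S_INR by reflexivity. lra.
    + rewrite count_occ_cons_neq by discriminate. lra.
Qed.

End W.

Lemma app_eq_len {A} (a b c d : list A) : length a = length c -> a ++ b = c ++ d -> a = c /\ b = d.
Proof.
  revert c; induction a as [|x a IH]; intros [|y c] Hl He; simpl in *; try lia; auto.
  injection He as -> He. destruct (IH c ltac:(lia) He). subst; auto.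
Qed.

Lemma blocks_nth {A} (f : nat -> A) m (bs : list (list A)) i :
  Forall (fun u => length u = m) bs ->
  concat bs = map f (seq i (length (concat bs))) ->
  forall j, (j < length bs)%nat -> nth j bs nil = map f (seq (i + j * m) m).
Proof.
  revert i; induction bs as [|b bs IH]; intros i HF Hc j Hj; simpl in *; [lia|].
  inversion HF; subst.
  rewrite length_app, seq_app, map_app in Hc.
  destruct (app_eq_len b (concat bs) (map f (seq i (length b))) _ ltac:(rewrite length_map, length_seq; reflexivity) Hc) as [Hb Hr].
  destruct j as [|j].
  - rewrite Nat.add_0_r. exact Hb.
  - rewrite (IH (i + length b)%nat H2 Hr j ltac:(lia)). f_equal. f_equal. lia.
Qed.

Lemma word_bound alpha m e w : 0 < alpha < 1 -> in_L alpha w -> abelian_power m e w ->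
  INR e * nint_dist (INR m * alpha) < 1.
Proof.
  intros Ha [rho [rc [i [Hrho Hw]]]] [bs [Hlen [HF [Hab Hc]]]].
  subst w.
  set (f := sturmian_letter rho alpha rc) in *.
  set (c := cnt (nth 0 bs nil)).
  assert (Hblk : forall j, (j < e)%nat -> cnt (map f (seq (i + j * m) m)) = c).
  { intros j Hj. rewrite <- (blocks_nth f m bs i HF Hw j ltac:(lia)).
    destruct e as [|e']; [lia|].
    destruct (Hab (nth j bs nil) (nth 0 bs nil)) as [_ H]; try (apply nth_In; lia).
    exact H. }
  assert (Hphi : forall j, (j <= e)%nat ->
    phi rho alpha rc (i + j * m) = phi rho alpha rc i + INR j * (INR m * alpha - INR c)).
  { induction j as [|j IH]; intros Hj.
    - rewrite Nat.add_0_r. simpl. lra.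
    - replace (i + S j * m)%nat with ((i + j * m) + m)%nat by lia.
      rewrite phi_block by exact Ha. fold f. rewrite (Hblk j) by lia. rewrite IH by lia. rewrite S_INR. ring. }
  pose proof (phi_bound rho alpha rc (i + e * m) i) as Hb.
  rewrite (Hphi e (le_n e)) in Hb.
  replace (phi rho alpha rc i + INR e * (INR m * alpha - INR c) - phi rho alpha rc i)
    with (INR e * (INR m * alpha - IZR (Z.of_nat c))) in Hb by (rewrite <- INR_IZR_INZ; ring).
  rewrite Rabs_mult, Rabs_right in Hb by (apply Rle_ge, pos_INR).
  pose proof (int_dist_ge (INR m * alpha) (Z.of_nat c)).
  pose proof (pos_INR e).
  nra.
Qed.

Theorem lemma3p1 (alpha : R) (m k : nat) :
  0 < alpha < 1 ->
  irrational alpha ->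
  (cf_a alpha 1 >= 2)%nat ->
  (m >= 1)%nat ->
  (k >= 1)%nat ->
  nint_dist (INR m * alpha) >=
    nint_dist (INR (cf_q alpha (k - 1)) * alpha) + nint_dist (INR (cf_q alpha k) * alpha) ->
  forall (e : nat) (w : list bool),
    in_L alpha w -> abelian_power m e w -> (e < cf_q alpha k)%nat.
Proof.
  intros Ha Hirr Ha1 Hm Hk Hd e w HL HA.
  pose proof (word_bound alpha m e w Ha HL HA) as Hw.
  assert (Hhalf : alpha <= 1/2).
  { simpl in Ha1. destruct (base_Int_part (1 / alpha)) as [H1 _].
    assert (Hz : (2 <= Int_part (1 / alpha))%Z) by lia.
    apply IZR_le in Hz.
    assert (1 / alpha >= 2) by lra.
    unfold Rdiv in H. rewrite Rmult_1_l in H.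
    apply Rmult_le_reg_l with (/ alpha). apply Rinv_0_lt_compat; lra.
    rewrite Rinv_l by lra. lra. }
  assert (Hnd : forall j, nint_dist (INR (cf_q alpha j) * alpha) = Dp alpha j).
  { intro j. destruct (cf_main alpha Ha Hirr j) as (_ & _ & _ & _ & HP & _ & HD).
    apply (nint_dist_frac _ (Z.of_nat (snd (cf_ppair alpha j))) _ ((-1)^j)).
    - apply sign_pm.
    - lra.
    - rewrite <- INR_IZR_INZ. change (INR (cf_q alpha j)) with (Q alpha j).
      fold (P alpha j). lra. }
  destruct k as [|k']; [lia|].
  replace (S k' - 1)%nat with k' in Hd by lia.
  rewrite !Hnd in Hd.
  destruct (cf_main alpha Ha Hirr (S k')) as (_ & HQ & HQm & Hid & _ & _ & HD).
  simpl Dm in Hid.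
  change (INR (cf_q alpha (S k'))) with (Q alpha (S k')) in *.
  apply INR_lt.
  pose proof (nint_dist_ge0 (INR m * alpha)).
  pose proof (pos_INR e).
  destruct (cf_main alpha Ha Hirr k') as (_ & _ & _ & _ & _ & _ & HD').
  change (INR (cf_q alpha (S k'))) with (Q alpha (S k')).
  assert (Q alpha (S k') * nint_dist (INR m * alpha) >= 1) by nra.
  nra.
Qed.
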